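(* Let $\mathcal{Y}=\{0,1\}$, let $\mathcal{X},\Phi$ be the natural feature construction, and for $n\in\mathbb{N}$ let $T_n=(f_n,\psi_n)$ where $\psi_n(x,x')=f_n$ if $f_n(x)=1,f_n(x')=0$; $\psi_n(x,x')=\neg f_n$ if $f_n(x)=0,f_n(x')=1$; and $\psi_n(x,x')=\bot$ otherwise. Let $\mathcal{T}=\{T_n:n\in\mathbb{N}\}$ and $H=\{(\bar 0,0),(\bar 1,1)\}$. Then $\mathrm{DFFdim}(\mathcal{T},H)=1$, while $\mathrm{Ldim}(\mathrm{DtO}(\mathcal{T},H))=\infty$; moreover there is a Littlestone tree of infinite depth shattered by $\mathrm{DtO}(\mathcal{T},H)$.
   Context: Setting. A teacher over $\mathcal{X},\mathcal{Y},\Phi$ ($\mathcal{Y}$ finite, $\Phi$ a set of Boolean features on $\mathcal{X}$, $\bot$ a null symbol) is a pair $T=(\ell,\psi)$ with $\ell:\mathcal{X}\to\mathcal{Y}$ and $\psi:\mathcal{X}\times\mathcal{X}\to\Phi\cup\{\bot\}$ such that whenever $\ell(x)\neq\ell(\hat x)$, $\phi:=\psi(x,\hat x)\in\Phi$, $\phi(x)=1$ and $\phi(\hat x)=0$. A teacher class is a set of teachers. A history is a non-empty set $H\subseteq\mathcal{X}\times\mathcal{Y}$, $H_{\mathcal{X}}=\{x:\exists y,(x,y)\in H\}$; a teacher $(\ell,\psi)$ is consistent with $H$ if $\ell(x)=y$ for all $(x,y)\in H$; $\mathcal{T}_H$ is the set of teachers in $\mathcal{T}$ consistent with $H$. DFF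 dimension. A DFF tree is a rooted tree whose nodes are triples $\langle y,\phi,x\rangle$ with $y\in\mathcal{Y}\cup\{\bot\}$, $\phi\in\Phi\cup\{\bot\}$, $x\in\mathcal{X}\cup\{\bot\}$, such that the root has $y=\phi=\bot$, a node has $x=\bot$ iff it is a leaf, every edge is labeled by a pair $(\hat x,\hat y)\in\mathcal{X}\times\mathcal{Y}$, and every non-root node $\langle y,\phi,x\rangle$ with incoming edge $(\hat x,\hat y)$ has $\phi\neq\bot$ whenever $y\neq\hat y$. For a parent–child pair $\langle\cdot,\cdot,x\rangle\xrightarrow{(\hat x,\hat y)}\langle y,\phi,\cdot\rangle$ on a path, $(x,y)$ is called a labeled example in that path. A path from the root is consistent with a teacher $(\ell,\psi)$ if for every such parent–child pair on it, $\ell(x)=y$ and, if $y\neq\hat y$, $\psi(x,\hat x)=\phi$. Given $\mathcal{T}$ consistent with $H$, a DFF tree is shattered by $\mathcal{T}$ and $H$ if: (1) every non-root node $\langle y,\phi,x\rangle$ with incoming edge $(\hat x,\hat y)$ has $y\neq\hat y$; (2) the labels of the outgoing edges of each non-leaf node $v$ are exactly the pairs that belong to $H$ or are labeled examples in the path from the root to $v$; (3) every root-to-leaf path is consistent with some teacher in $\mathcal{T}_H$; (4) all root-to-leaf paths have the same number of edges, called the height. $\mathrm{DFFdim}(\mathcal{T},H)$ is the maximal height of a DFF tree shattered by $\mathcal{T}$ and $H$. Natural feature construction: $\mathcal{X}=\{0,1\}^{\mathbb{N}}$, $f_n(x)=x(n)$, $\Phi=\bigcup_{n\in\mathbb{N}}\{f_n,\neg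 f_n\}$ with $\neg f_n=1-f_n$; $\bar 0,\bar 1$ are the all-zero and all-one vectors. $\mathrm{Ldim}$ is the Littlestone dimension: the maximal depth of a complete binary tree whose internal nodes are labeled by examples and whose two outgoing edges at each internal node are labeled by two distinct labels, such that for every root-to-leaf path some function in the class agrees with all (example, edge label) pairs on the path; an infinite-depth tree is shattered if every finite path from the root is realized by some function in the class. Mapping DtO: given $\mathcal{T}$ and $H$, let $\mathcal{X}''=\mathcal{X}\setminus H_{\mathcal{X}}$; then $\mathrm{DtO}(\mathcal{T},H)=\{\ell|_{\mathcal{X}''}:(\ell,\psi)\in\mathcal{T}\}$. *)

(* Defs.v *)
From Stdlib Require Import List Arith.
Import ListNotations.

Definition X := nat -> bool.
(* Y = {0,1} is represented by bool (0 = false, 1 = true). *)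
Definition Y := bool.

(* Phi = { f_n, not f_n : n in N } *)
Inductive Feat : Type := FPos (n : nat) | FNeg (n : nat).

Definition feval (phi : Feat) (x : X) : bool :=
  match phi with FPos n => x n | FNeg n => negb (x n) end.

Definition zeroX : X := fun _ => false.
Definition oneX  : X := fun _ => true.

(* a teacher is a pair (l, psi); None plays the role of the null symbol ⊥ *)
Definition teacher := ((X -> Y) * (X -> X -> option Feat))%type.

Definition is_teacher (T : teacher) : Prop :=
  forall x xh, fst T x <> fst T xh ->
    exists phi, snd T x xh = Some phi /\ feval phi x = true /\ feval phi xh = false.

Definition teacher_class := teacher -> Prop.
Definition history := (X * Y) -> Prop.

Definition consistent (T : teacher) (H : history) : Prop :=
  forall x y, H (x, y) -> fst T x = y.

Definition restrict (C : teacher_class) (H : history) : teacher_class :=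
  fun T => C T /\ consistent T H.

Definition histX (H : history) : X -> Prop := fun x => exists y, H (x, y).

(* A node <y, phi, x> together with its list of labeled outgoing edges. *)
Inductive dfftree : Type :=
  DNode : option Y -> option Feat -> option X -> list ((X * Y) * dfftree) -> dfftree.

(* A parent-child step along a path: parent's x, incoming edge label (xh,yh)
   of the child, the child's y and phi. *)
Record step := Step { s_x : X; s_xh : X; s_yh : Y; s_y : option Y; s_phi : option Feat }.

Definition step_consistent (T : teacher) (s : step) : Prop :=
  s_y s = Some (fst T (s_x s)) /\
  (s_y s <> Some (s_yh s) -> snd T (s_x s) (s_xh s) = s_phi s).

Definition path_consistent (T : teacher) (p : list step) : Prop :=
  forall s, In s p -> step_consistent T s.

Definition labeled_example (p : list step) (x : X) (y : Y) : Prop :=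
  exists s, In s p /\ s_x s = x /\ s_y s = Some y.

(* [shattered_from C H p d v]: the subtree rooted at v, reached from the root by
   the path p, satisfies the DFF-tree conditions and conditions (1)-(3) of
   shattering by C and H, and every path from v to a leaf has exactly d edges. *)
Inductive shattered_from (C : teacher_class) (H : history) :
    list step -> nat -> dfftree -> Prop :=
| SLeaf : forall p y phi,
    (exists T, restrict C H T /\ path_consistent T p) ->
    shattered_from C H p 0 (DNode y phi None [])
| SNode : forall p d y phi x ch,
    (* (2): outgoing labels are exactly H ∪ labeled examples of the path *)
    (forall xh yh, (exists c, In ((xh, yh), c) ch) <->
                   (H (xh, yh) \/ labeled_example p xh yh)) ->
    NoDup (map fst ch) ->
    (forall xh yh c, In ((xh, yh), c) ch ->
       exists y' phi' x' ch',
         c = DNode y' phi' x' ch' /\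
         (y' <> Some yh -> phi' <> None) /\
         y' <> Some yh /\
         shattered_from C H (p ++ [Step x xh yh y' phi']) d c) ->
    shattered_from C H p (S d) (DNode y phi (Some x) ch).

Definition dff_shattered (C : teacher_class) (H : history) (t : dfftree) (d : nat) : Prop :=
  exists x ch, t = DNode None None x ch /\ shattered_from C H [] d t.

Definition DFFdim_eq (C : teacher_class) (H : history) (n : nat) : Prop :=
  (exists t, dff_shattered C H t n) /\
  (forall t d, dff_shattered C H t d -> d <= n).

Definition Xpp (H : history) := { x : X | ~ histX H x }.

Definition DtO (C : teacher_class) (H : history) : (Xpp H -> Y) -> Prop :=
  fun h => exists T, C T /\ h = (fun x => fst T (proj1_sig x)).

(* A complete binary Littlestone tree: the internal node reached by following
   the edge labels b (a list of labels from the root) is labeled tr b.  Since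
   Y = {0,1}, the two outgoing edges of a node are labeled 0 and 1. *)
Definition realizes {Z : Type} (h : Z -> Y) (tr : list Y -> Z) (b : list Y) : Prop :=
  forall i, i < length b -> h (tr (firstn i b)) = nth i b false.

(* finite tree of depth d shattered (only nodes of length < d are used) *)
Definition L_shattered_depth {Z : Type} (C : (Z -> Y) -> Prop) (tr : list Y -> Z) (d : nat) : Prop :=
  forall b, length b = d -> exists h, C h /\ realizes h tr b.

Definition L_shattered_inf {Z : Type} (C : (Z -> Y) -> Prop) (tr : list Y -> Z) : Prop :=
  forall b, exists h, C h /\ realizes h tr b.

Definition Ldim_infinite {Z : Type} (C : (Z -> Y) -> Prop) : Prop :=
  forall d, exists tr, L_shattered_depth C tr d.

Definition psi_n (n : nat) (x x' : X) : option Feat :=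
  match x n, x' n with
  | true, false => Some (FPos n)
  | false, true => Some (FNeg n)
  | _, _ => None
  end.

Definition T_n (n : nat) : teacher := (fun x => x n, psi_n n).

Definition Tcls : teacher_class := fun T => exists n, T = T_n n.

Definition H0 : history := fun p => p = (zeroX, false) \/ p = (oneX, true).

(* Main.v *)
Require Import Defs.
From Stdlib Require Import List Arith Lia.
Import ListNotations.

Lemma ext_T : forall d p t, shattered_from Tcls H0 p d t ->
  exists T, restrict Tcls H0 T /\ path_consistent T p.
Proof.
  induction d as [|d IH]; intros p t Hs.
  - inversion Hs; subst; auto.
  - inversion Hs as [|p0 d0 y0 phi0 x1 ch Hiff Hnd Hall]; subst.
    destruct (proj2 (Hiff zeroX false)) as [c Hc].
    { left. left. reflexivity. }
    destruct (Hall _ _ _ Hc) as (y' & phi' & x' & ch' & -> & _ & _ & Hs').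
    destruct (IH _ _ Hs') as [T [HT HP]].
    exists T; split; auto.
    intros s Hin; apply HP; apply in_or_app; auto.
Qed.

Definition x0 : X := fun n => Nat.eqb n 0.

Definition tree1 : dfftree :=
  DNode None None (Some x0)
    [((zeroX, false), DNode (Some true) (Some (FPos 0)) None []);
     ((oneX, true), DNode (Some false) (Some (FNeg 1)) None [])].

Lemma cons_H0 n : consistent (T_n n) H0.
Proof. intros x y [E|E]; injection E; intros; subst; reflexivity. Qed.

Lemma tree1_ok : dff_shattered Tcls H0 tree1 1.
Proof.
  eexists; eexists; split; [reflexivity|].
  constructor.
  - intros xh yh; split.
    + intros [c [E|[E|[]]]]; injection E; intros; subst; left; unfold H0; auto.
    + intros [[E|E]|[s [[] _]]]; injection E; intros; subst; eexists; simpl; eauto.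
  - simpl. constructor; [|constructor; [|constructor]]; simpl.
    + intros [E|[]]. discriminate E.
    + intros [].
  - intros xh yh c [E|[E|[]]]; injection E; intros; subst.
    + do 4 eexists; split; [reflexivity|]; split; [congruence|]; split; [congruence|].
      constructor. exists (T_n 0); split.
      * split; [exists 0; reflexivity| apply cons_H0].
      * intros s [<-|[]]; split; reflexivity.
    + do 4 eexists; split; [reflexivity|]; split; [congruence|]; split; [congruence|].
      constructor. exists (T_n 1); split.
      * split; [exists 1; reflexivity| apply cons_H0].
      * intros s [<-|[]]; split; reflexivity.
Qed.

Lemma upper : forall t d, dff_shattered Tcls H0 t d -> d <= 1.
Proof.
  intros t d [x [ch [-> Hs]]].
  destruct d as [|[|k]]; [lia|lia|exfalso].
  inversion Hs as [|p0 d0 y0 phi0 x1 ch0 Hiff Hnd Hall]; subst.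
  destruct (proj2 (Hiff zeroX false)) as [c Hc]. { left; left; reflexivity. }
  destruct (Hall _ _ _ Hc) as (y' & phi' & x' & ch' & -> & _ & Hy' & Hs').
  simpl in Hs'. inversion Hs' as [|p1 d1 y1 phi1 xx ch1 Hiff1 Hnd1 Hall1]; subst.
  destruct (proj2 (Hiff1 zeroX false)) as [c2 Hc2]. { left; left; reflexivity. }
  destruct (proj2 (Hiff1 oneX true)) as [c3 Hc3]. { left; right; reflexivity. }
  destruct (Hall1 _ _ _ Hc2) as (y2 & phi2 & x2 & ch2 & -> & _ & Hy2 & Hs2).
  destruct (Hall1 _ _ _ Hc3) as (y3 & phi3 & x3 & ch3 & -> & _ & Hy3 & Hs3).
  destruct (ext_T _ _ _ Hs2) as [T2 [[[n2 ->] _] P2]].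
  destruct (ext_T _ _ _ Hs3) as [T3 [[[n3 ->] _] P3]].
  destruct (P2 (Step x1 zeroX false y' phi')) as [A1 B1]. { simpl; auto. }
  destruct (P2 (Step xx zeroX false y2 phi2)) as [A2 B2]. { simpl; auto. }
  destruct (P3 (Step x1 zeroX false y' phi')) as [A3 B3]. { simpl; auto. }
  destruct (P3 (Step xx oneX true y3 phi3)) as [A4 B4]. { simpl; auto. }
  simpl in A1, B1, A2, B2, A3, B3, A4, B4.
  subst y'. subst y2. subst y3.
  specialize (B1 Hy'). specialize (B3 Hy').
  unfold psi_n, zeroX in B1, B3.
  destruct (x1 n2) eqn:E2; [|congruence].
  destruct (x1 n3) eqn:E3; [|congruence].
  rewrite <- B3 in B1. injection B1; intros; subst n3.
  destruct (xx n2); congruence.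
Qed.

Fixpoint code (b : list bool) : nat :=
  match b with [] => 0 | a :: l => 2 * code l + 1 + (if a then 1 else 0) end.

Fixpoint dec (f n : nat) : list bool :=
  match f with
  | 0 => []
  | S f' => match n with
            | 0 => []
            | S m => Nat.odd m :: dec f' (Nat.div2 m)
            end
  end.

Lemma code_len b : length b <= code b.
Proof. induction b as [|a l IH]; simpl; [lia|destruct a; lia]. Qed.


Lemma code_cons a l : code (a :: l) = S (if a then S (2 * code l) else 2 * code l).
Proof. simpl; destruct a; lia. Qed.

Lemma dec_code : forall b f, length b <= f -> dec f (code b) = b.
Proof.
  induction b as [|a l IH]; intros f Hf.
  - destruct f; reflexivity.
  - destruct f as [|f]; [simpl in Hf; lia|].
    rewrite code_cons.
    change (Nat.odd (if a then S (2 * code l) else 2 * code l)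
            :: dec f (Nat.div2 (if a then S (2 * code l) else 2 * code l)) = a :: l).
    f_equal.
    + destruct a.
      * rewrite Nat.odd_succ, Nat.even_mul; reflexivity.
      * rewrite Nat.odd_mul; reflexivity.
    + replace (Nat.div2 (if a then S (2 * code l) else 2 * code l)) with (code l).
      * apply IH. simpl in Hf; lia.
      * destruct a.
        -- rewrite Nat.div2_succ_double; reflexivity.
        -- rewrite Nat.div2_double; reflexivity.
Qed.

Definition xp (p : list bool) : X := fun n =>
  match n with
  | 0 => false
  | 1 => true
  | S (S m) => let b := dec m m in
      if list_eq_dec Bool.bool_dec (firstn (length p) b) p
      then nth (length p) b false else false
  end.

Lemma xp_notH p : ~ histX H0 (xp p).
Proof.
  intros [y [E|E]]; injection E; intros _ E'.
  - assert (H := f_equal (fun f => f 1) E'); discriminate.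
  - assert (H := f_equal (fun f => f 0) E'); discriminate.
Qed.

Definition trp (p : list bool) : Xpp H0 := exist _ (xp p) (xp_notH p).

Lemma inf_tree : L_shattered_inf (DtO Tcls H0) trp.
Proof.
  intros b.
  exists (fun x => fst (T_n (S (S (code b)))) (proj1_sig x)); split.
  - exists (T_n (S (S (code b)))); split; [eexists; reflexivity|reflexivity].
  - intros i Hi. simpl. rewrite dec_code by apply code_len.
    rewrite firstn_length_le by lia.
    match goal with |- context [list_eq_dec ?d ?u ?v] => destruct (list_eq_dec d u v) end; [reflexivity|exfalso; auto].
Qed.

Theorem mainTheorem11 :
  DFFdim_eq Tcls H0 1 /\
  Ldim_infinite (DtO Tcls H0) /\
  (exists tr : list Y -> Xpp H0, L_shattered_inf (DtO Tcls H0) tr).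
Proof.
  split; [split; [exists tree1; apply tree1_ok | apply upper]|].
  split.
  - intros d; exists trp; intros b _; apply inf_tree.
  - exists trp; apply inf_tree.
Qed.
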